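(* Let $d\ge1$ and let $h_1<h_2<\dots$ be a strictly increasing sequence of integers with $h_1\ge2$. Suppose that $L_d(h_1,h_2,\dots)$ and $L_d(h_1-1,h_2-1,h_3-1,\dots)$ are perfect lattices of minimum $4$, and that $L_{d+1}(h_1,h_2,\dots)\subset\mathbb Z^{d+3}$ contains a vector of norm $4$ whose first and last coordinates are both equal to $1$. Then $L_{d+1}(h_1,h_2,\dots)$ is perfect.
   Context: For a strictly increasing (finite or infinite, possibly empty) sequence of positive integers $h_1<h_2<\dots$ (called holes) and an integer $d\ge1$, let $s_1<s_2<\dots<s_{d+2}$ be the $d+2$ smallest elements of $\{1,2,3,\dots\}\setminus\{h_1,h_2,\dots\}$, and define $L_d(h_1,h_2,\dots)=\{x\in\mathbb Z^{d+2}:\ \sum_{i=1}^{d+2}x_i=0,\ \sum_{i=1}^{d+2}s_ix_i=0\}$ with the standard inner product of $\mathbb R^{d+2}$; it is an even integral lattice of rank $d$ with no vectors of norm $2$. Norm means squared Euclidean length; the minimum is the smallest norm of a nonzero element. A lattice $L$ of rank $n$ is perfect if $\{v\otimes v\}$, $v$ ranging over its minimal vectors, spans the $\binom{n+1}{2}$-dimensional space of symmetric tensors in $(L\otimes\mathbb R)\otimes(L\otimes\mathbb R)$. *)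

(* Defs.v *)
From HB Require Import structures.
From mathcomp Require Import all_boot all_order all_algebra.
Set Implicit Arguments. Unset Strict Implicit. Unset Printing Implicit Defensive.
Import Order.TTheory GRing.Theory Num.Theory.
Local Open Scope ring_scope.

(* The set of holes is a predicate [H] on positive integers (values of H at 0
   are irrelevant).  [nonholes H N] = elements of {1,...,N} that are not holes,
   in increasing order. *)
Definition nonholes (H : pred nat) (N : nat) : seq nat :=
  [seq n <- iota 1 N | ~~ H n].

(* s_{i+1} = nth 0 (nonholes H N) i  (meaningful when N is large enough that
   nonholes H N has at least d+2 elements). *)

Definition Ld (H : pred nat) (N d : nat) : 'rV[int]_(d.+2) -> Prop :=
  fun x => \sum_(i < d.+2) x 0 i = 0 /\
           \sum_(i < d.+2) ((nth 0%N (nonholes H N) i)%:Z * x 0 i) = 0.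

Arguments Ld H N d : clear implicits.

Definition shift_holes (H : pred nat) : pred nat := fun n => H n.+1.

Definition vnorm m (x : 'rV[int]_m) : int := \sum_(i < m) x 0 i ^+ 2.

Definition lat_min m (L : 'rV[int]_m -> Prop) (mu : int) : Prop :=
  (exists x, L x /\ x != 0 /\ vnorm x = mu) /\
  (forall x, L x -> x != 0 -> mu <= vnorm x).

Definition minvec m (L : 'rV[int]_m -> Prop) (x : 'rV[int]_m) : Prop :=
  L x /\ x != 0 /\ (forall y, L y -> y != 0 -> vnorm x <= vnorm y).

Definition toQ m (v : 'rV[int]_m) : 'rV[rat]_m := map_mx (fun z : int => z%:~R) v.

Definition in_span m (L : 'rV[int]_m -> Prop) (u : 'rV[rat]_m) : Prop :=
  exists (vs : seq 'rV[int]_m) (cs : seq rat),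
    (forall v, v \in vs -> L v) /\
    u = \sum_(i < size vs) cs`_i *: toQ vs`_i.

(* Symmetric tensors in (L⊗Q)⊗(L⊗Q), as symmetric m×m matrices whose rows
   (hence also columns) lie in L⊗Q. *)
Definition sym_tensor m (L : 'rV[int]_m -> Prop) (M : 'M[rat]_m) : Prop :=
  M^T = M /\ (forall i, in_span L (row i M)).

Definition perfect m (L : 'rV[int]_m -> Prop) : Prop :=
  forall M : 'M[rat]_m, sym_tensor L M ->
    exists (vs : seq 'rV[int]_m) (cs : seq rat),
      (forall v, v \in vs -> minvec L v) /\
      M = \sum_(i < size vs) cs`_i *: ((toQ vs`_i)^T *m toQ vs`_i).

(* Main.v *)
Require Import Defs.
From HB Require Import structures.
From mathcomp Require Import all_boot all_order all_algebra.
From mathcomp Require Import zify ring lra.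
Import Order.TTheory GRing.Theory Num.Theory.
Local Open Scope ring_scope.

Definition pp (z : int) : int := if 0 <= z then z else 0.
Definition nn (z : int) : int := if 0 <= z then 0 else - z.

Lemma min4_gen n (s : 'I_n -> int) (y : 'rV[int]_n) :
  injective s -> \sum_i y 0 i = 0 -> \sum_i s i * y 0 i = 0 -> y != 0 ->
  4 <= vnorm y.
Proof.
move=> sinj sum0 ssum0 ynz.
have ppnn z : z = pp z - nn z by rewrite /pp /nn; case: ifP => h; lia.
have pp0 z : 0 <= pp z by rewrite /pp; case: ifP => h; lia.
have nn0 z : 0 <= nn z by rewrite /nn; case: ifP => h; lia.
have PQ : \sum_i pp (y 0 i) = \sum_i nn (y 0 i).
  have E : \sum_i (pp (y 0 i) - nn (y 0 i)) = 0.
    by rewrite -[RHS]sum0; apply: eq_bigr => i _; rewrite -ppnn.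
  by apply/eqP; rewrite -subr_eq0 -sumrB E.
have hn : \sum_i (pp (y 0 i) + nn (y 0 i)) <= vnorm y.
  rewrite /vnorm; apply: ler_sum => i _; rewrite /pp /nn expr2.
  case: ifP => h; nia.
rewrite big_split /= -PQ in hn.
set P := \sum_i pp (y 0 i) in PQ hn.
have P0 : 0 <= P by apply: sumr_ge0.
case: (ltrP 1 P) => [gt1|le1]; first by lia.
have allpp : P = 0 -> forall i, pp (y 0 i) = 0.
  by move=> HP i; apply: (psumr_eq0P (P := predT) _ HP).
have allnn : P = 0 -> forall i, nn (y 0 i) = 0.
  by move=> HP i; rewrite PQ in HP; apply: (psumr_eq0P (P := predT) _ HP).
have [HP0|HP1] : P = 0 \/ P = 1 by lia.
  case/negP: ynz; apply/eqP/rowP => i; rewrite mxE.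
  by rewrite (ppnn (y 0 i)) (allpp HP0) (allnn HP0) subr0.
have [i Hi] : exists i, 0 < pp (y 0 i).
  case: (pickP (fun i => 0 < pp (y 0 i))) => [i Hi|Hn]; first by exists i.
  have : P = 0.
    apply: big1 => i _; have := Hn i; have := pp0 (y 0 i) => /= a b; lia.
  lia.
have [j Hj] : exists j, 0 < nn (y 0 j).
  case: (pickP (fun k => 0 < nn (y 0 k))) => [k Hk|Hn]; first by exists k.
  have : \sum_i nn (y 0 i) = 0.
    apply: big1 => i' _; have := Hn i'; have := nn0 (y 0 i') => /= a b; lia.
  lia.
have Hpi : pp (y 0 i) = 1 /\ forall k, k != i -> pp (y 0 k) = 0.
  have := HP1; rewrite /P (bigD1 i) //= => E.
  have S0 : 0 <= \sum_(k | k != i) pp (y 0 k) by apply: sumr_ge0.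
  move: E S0; set T := \sum_(k | k != i) _ => E S0.
  have E1 : pp (y 0 i) = 1 by lia.
  split=> // k Hk.
  have E2 : T = 0 by lia.
  exact: (psumr_eq0P _ E2).
have Hnj : nn (y 0 j) = 1 /\ forall k, k != j -> nn (y 0 k) = 0.
  have := HP1; rewrite PQ (bigD1 j) //= => E.
  have S0 : 0 <= \sum_(k | k != j) nn (y 0 k) by apply: sumr_ge0.
  move: E S0; set T := \sum_(k | k != j) _ => E S0.
  have E1 : nn (y 0 j) = 1 by lia.
  split=> // k Hk.
  have E2 : T = 0 by lia.
  exact: (psumr_eq0P _ E2).
case: Hpi => yi ppo; case: Hnj => yj nno.
have yi1 : y 0 i = 1 by move: yi; rewrite /pp; case: ifP => h; lia.
have yj1 : y 0 j = -1 by move: yj; rewrite /nn; case: ifP => h; lia.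
have ij : j != i by apply/eqP => E; move: yi1; rewrite -E yj1.
have yk k : k != i -> k != j -> y 0 k = 0.
  move=> ki kj; have := ppo k ki; have := nno k kj.
  by rewrite /pp /nn; case: ifP => h; lia.
move: ssum0; rewrite (bigD1 i) //= (bigD1 j) //= big1; last first.
  by move=> k /andP [ki kj]; rewrite yk // mulr0.
rewrite yi1 yj1 addr0 mulr1 mulrN1 => /eqP; rewrite subr_eq0 => /eqP /sinj E.
by move: ij; rewrite E eqxx.
Qed.


Definition sq (H : pred nat) (N k : nat) : rat := ((nth 0%N (nonholes H N) k)%:Z)%:~R.

Definition EqQ (H : pred nat) (N d : nat) (u : 'rV[rat]_(d.+2)) : Prop :=
  \sum_(i < d.+2) u 0 i = 0 /\ \sum_(i < d.+2) sq H N i * u 0 i = 0.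

Lemma Ld_toQ H N d x : Ld H N d x <-> EqQ H N d (toQ x).
Proof.
rewrite /Ld /EqQ.
have E1 : \sum_(i < d.+2) toQ x 0 i = (\sum_(i < d.+2) x 0 i)%:~R.
  by rewrite rmorph_sum; apply: eq_bigr => i _; rewrite mxE.
have E2 : \sum_(i < d.+2) sq H N i * toQ x 0 i =
          (\sum_(i < d.+2) ((nth 0%N (nonholes H N) i)%:Z * x 0 i))%:~R.
  by rewrite rmorph_sum; apply: eq_bigr => i _; rewrite mxE /= intrM.
rewrite E1 E2; split=> [[-> ->]|[/eqP h1 /eqP h2]]; first by [].
by move: h1 h2; rewrite !intq_eq0 => /eqP -> /eqP ->.
Qed.

Lemma span_EqQ H N d u : in_span (Ld H N d) u -> EqQ H N d u.
Proof.
case=> vs [cs [hv ->]].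
have hvs (i : nat) : (i < size vs)%N -> EqQ H N d (toQ vs`_i).
  by move=> hi; apply/Ld_toQ/hv/mem_nth.
split.
- under eq_bigr do rewrite summxE.
  rewrite exchange_big /= big1 // => i _.
  under eq_bigr do rewrite mxE.
  by rewrite -mulr_sumr (proj1 (hvs i (ltn_ord i))) mulr0.
- under eq_bigr do rewrite summxE mulr_sumr.
  rewrite exchange_big /= big1 // => i _.
  under eq_bigr do rewrite mxE mulrCA.
  by rewrite -mulr_sumr (proj2 (hvs i (ltn_ord i))) mulr0.
Qed.

Lemma EqQ_span H N d u : EqQ H N d u -> in_span (Ld H N d) u.
Proof.
move=> [h1 h2].
pose D : int := \prod_(j < d.+2) denq (u 0 j).
pose z : 'rV[int]_(d.+2) :=
  \row_j (numq (u 0 j) * \prod_(k < d.+2 | k != j) denq (u 0 k)).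
have Dnz : D != 0.
  by rewrite /D; apply/prodf_neq0 => j _; apply: denq_neq0.
have hz : toQ z = D%:~R *: u.
  apply/rowP => j; rewrite !mxE /D [in RHS](bigD1 j) //= !intrM numqE.
  by rewrite [RHS]mulrC [RHS]mulrA.
exists [:: z], [:: D%:~R^-1]; split.
  move=> v; rewrite inE => /eqP ->; apply/Ld_toQ; rewrite hz; split.
  - under eq_bigr do rewrite mxE.
    by rewrite -mulr_sumr h1 mulr0.
  - under eq_bigr do rewrite mxE mulrCA.
    by rewrite -mulr_sumr h2 mulr0.
rewrite big_ord1 /= hz scalerA mulVf ?scale1r //.
by rewrite intq_eq0.
Qed.

Lemma spanE H N d u : in_span (Ld H N d) u <-> EqQ H N d u.
Proof. by split; [apply: span_EqQ | apply: EqQ_span]. Qed.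


Lemma nh_succ H N :
  nonholes H N.+1 = nonholes H N ++ (if ~~ H N.+1 then [:: N.+1] else [::]).
Proof.
rewrite /nonholes -[N.+1]addn1 iotaD filter_cat /= add1n.
by rewrite addn1.
Qed.

Lemma nh_prefix H N k : (k < size (nonholes H N))%N ->
  nth 0%N (nonholes H N) k = nth 0%N (nonholes H N.+1) k.
Proof. by move=> hk; rewrite nh_succ nth_cat hk. Qed.

Lemma nh_shift H N : ~~ H 1%N ->
  nonholes H N.+1 = 1%N :: map S (nonholes (shift_holes H) N).
Proof.
move=> h1; rewrite /nonholes /= h1 /=; congr (_ :: _).
have -> : iota 2 N = map S (iota 1 N).
  by rewrite (iotaDl 1 1); apply: eq_map => x; rewrite add1n.
by rewrite filter_map.
Qed.

Lemma nh_uniq H N : uniq (nonholes H N).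
Proof. by rewrite /nonholes filter_uniq // iota_uniq. Qed.

Lemma nh_size_shift H N : ~~ H 1%N ->
  (size (nonholes H N) <= (size (nonholes (shift_holes H) N)).+1)%N.
Proof.
move=> h1; have := @nh_shift H N h1; rewrite nh_succ => E.
have := congr1 size E; rewrite size_cat /= size_map => <-.
by rewrite leq_addr.
Qed.

Lemma nh_nth_shift H N k : ~~ H 1%N -> (k.+1 < size (nonholes H N))%N ->
  nth 0%N (nonholes H N) k.+1 = (nth 0%N (nonholes (shift_holes H) N) k).+1.
Proof.
move=> h1 hk; rewrite nh_prefix // nh_shift //= (nth_map 0%N) //.
by have := @nh_size_shift H N h1; lia.
Qed.


Definition G {n} (v : 'rV[int]_n) : 'M[rat]_n := (toQ v)^T *m toQ v.

Definition Rep {n} (L : 'rV[int]_n -> Prop) (M : 'M[rat]_n) : Prop :=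
  exists (vs : seq 'rV[int]_n) (cs : seq rat),
      (forall v, v \in vs -> minvec L v) /\
      M = \sum_(i < size vs) cs`_i *: ((toQ vs`_i)^T *m toQ vs`_i).

Lemma Rep0 {n} (L : 'rV[int]_n -> Prop) : Rep L 0.
Proof. by exists [::], [::]; split=> //; rewrite big_ord0. Qed.

Lemma Rep_cons {n} (L : 'rV[int]_n -> Prop) M c v :
  minvec L v -> Rep L M -> Rep L (c *: G v + M).
Proof.
move=> hv [vs [cs [hvs ->]]]; exists (v :: vs), (c :: cs); split.
  by move=> w; rewrite inE => /orP [/eqP ->|/hvs].
by rewrite /= big_ord_recl /=.
Qed.

Lemma Rep_add {n} (L : 'rV[int]_n -> Prop) M1 M2 :
  Rep L M1 -> Rep L M2 -> Rep L (M1 + M2).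
Proof.
case=> vs [cs [hvs ->]] h2; elim: vs cs hvs => [|v vs IH] cs hvs.
  by rewrite big_ord0 add0r.
rewrite /= big_ord_recl /= -addrA; apply: Rep_cons.
  by apply: hvs; rewrite inE eqxx.
have := IH (behead cs); rewrite /=.
have -> : \sum_(i < size vs) (behead cs)`_i *: ((toQ vs`_i)^T *m toQ vs`_i) =
          \sum_(i < size vs) cs`_(bump 0 i) *: ((toQ vs`_i)^T *m toQ vs`_i).
  by apply: eq_bigr => i _; rewrite nth_behead.
apply=> w hw; apply: hvs; by rewrite inE hw orbT.
Qed.

Lemma Rep_map {k n} (L : 'rV[int]_n -> Prop) (f : 'rV[int]_k -> 'rV[int]_n)
   (vs : seq 'rV[int]_k) (cs : seq rat) :
  (forall v, v \in vs -> minvec L (f v)) ->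
  Rep L (\sum_(i < size vs) cs`_i *: G (f vs`_i)).
Proof.
elim: vs cs => [|v vs IH] cs hvs; first by rewrite big_ord0; apply: Rep0.
rewrite /= big_ord_recl /=; apply: Rep_cons.
  by apply: hvs; rewrite inE eqxx.
have := IH (behead cs).
have -> : \sum_(i < size vs) (behead cs)`_i *: G (f vs`_i) =
          \sum_(i < size vs) cs`_(bump 0 i) *: G (f vs`_i).
  by apply: eq_bigr => i _; rewrite nth_behead.
apply=> w hw; apply: hvs; by rewrite inE hw orbT.
Qed.

Lemma GE {n} (v : 'rV[int]_n) i j : G v i j = (v 0 i)%:~R * (v 0 j)%:~R.
Proof. by rewrite /G !mxE big_ord1 !mxE. Qed.

Lemma row_outer {n} (u w : 'rV[rat]_n) i : row i (u^T *m w) = u 0 i *: w.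
Proof. by apply/rowP => j; rewrite !mxE big_ord1 !mxE. Qed.

Lemma norm4 {n} (L : 'rV[int]_n -> Prop) v : minvec L v -> lat_min L 4 -> vnorm v = 4.
Proof.
move=> [Lv [vnz hv]] [[y [Ly [ynz ny]]] hmin].
apply/eqP; rewrite eq_le; apply/andP; split; first by rewrite -ny; apply: hv.
exact: hmin.
Qed.


Definition extA {n} (v : 'rV[int]_n.+1) : 'rV[int]_n.+2 :=
  \row_(j < n.+2) (if (j < n.+1)%N then v 0 (inord j) else 0).
Definition extB {n} (v : 'rV[int]_n.+1) : 'rV[int]_n.+2 :=
  \row_(j < n.+2) (if (j == 0%N :> nat) then 0 else v 0 (inord j.-1)).

Lemma inord_widen n (i : 'I_n.+1) : inord (widen_ord (leqnSn n.+1) i) = i.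
Proof. by apply: val_inj; rewrite /= inordK // ltnS ltnW. Qed.

Lemma inord_lift n (i : 'I_n.+1) : inord (lift ord0 i).-1 = i.
Proof. by apply: val_inj; rewrite lift0 /= inordK. Qed.

Lemma sumA {n} (F : nat -> int) (v : 'rV[int]_n.+1) :
  \sum_(j < n.+2) F j * extA v 0 j = \sum_(j < n.+1) F j * v 0 j.
Proof.
rewrite big_ord_recr /= mxE ltnn mulr0 addr0.
by apply: eq_bigr => i _; rewrite mxE /= ltn_ord inord_widen.
Qed.

Lemma sumB {n} (F : nat -> int) (v : 'rV[int]_n.+1) :
  \sum_(j < n.+2) F j * extB v 0 j = \sum_(j < n.+1) F j.+1 * v 0 j.
Proof.
rewrite big_ord_recl /= mxE /= mulr0 add0r.
by apply: eq_bigr => i _; rewrite mxE inord_lift lift0.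
Qed.

Lemma extA_L H N d v : Ld H N d v -> Ld H N d.+1 (extA v).
Proof.
move=> [h1 h2]; split.
  by have := sumA (fun _ => 1) v; rewrite /=; under eq_bigr do rewrite mul1r;
     under [X in _ = X -> _]eq_bigr do rewrite mul1r; move=> ->.
by rewrite (sumA (fun j => (nth 0%N (nonholes H N) j)%:Z)).
Qed.

Lemma extA_norm {n} (v : 'rV[int]_n.+1) : vnorm (extA v) = vnorm v.
Proof.
rewrite /vnorm big_ord_recr /= mxE ltnn expr0n addr0.
by apply: eq_bigr => i _; rewrite mxE /= ltn_ord inord_widen.
Qed.

Lemma extB_norm {n} (v : 'rV[int]_n.+1) : vnorm (extB v) = vnorm v.
Proof.
rewrite /vnorm big_ord_recl /= mxE /= expr0n add0r.
by apply: eq_bigr => i _; rewrite mxE lift0 /= inord_val.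
Qed.

Lemma extB_L H N d v : ~~ H 1%N -> (d.+3 <= size (nonholes H N))%N ->
  Ld (shift_holes H) N d v -> Ld H N d.+1 (extB v).
Proof.
move=> h1 hs [e1 e2]; split.
  have := sumB (fun _ => 1) v; rewrite /=; under eq_bigr do rewrite mul1r.
  under [X in _ = X -> _]eq_bigr do rewrite mul1r; move=> ->; exact: e1.
rewrite (sumB (fun j => (nth 0%N (nonholes H N) j)%:Z)).
rewrite (eq_bigr (fun j : 'I_d.+2 => (nth 0%N (nonholes (shift_holes H) N) j)%:Z * v 0 j + v 0 j)).
  by rewrite big_split /= e1 e2 addr0.
move=> i _; rewrite nh_nth_shift //; last by have := ltn_ord i; lia.
by rewrite -addn1 PoszD mulrDl mul1r.
Qed.

Lemma V_min H N d w : (d.+3 <= size (nonholes H N))%N ->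
  Ld H N d.+1 w -> vnorm w = 4 -> minvec (Ld H N d.+1) w.
Proof.
move=> hs Lw nw; split=> //; split.
  by apply/eqP => w0; move: nw; rewrite w0 /vnorm big1 // => i _; rewrite mxE expr0n.
move=> y Ly ynz; rewrite nw.
case: Ly => e1 e2.
apply: (@min4_gen _ (fun i : 'I_d.+3 => (nth 0%N (nonholes H N) i)%:Z)) => //.
move=> i j /eqP; rewrite eqz_nat nth_uniq ?nh_uniq //.
- by move/eqP/val_inj.
- exact: (leq_trans (ltn_ord i) hs).
- exact: (leq_trans (ltn_ord j) hs).
Qed.

Lemma extAE {n} (v : 'rV[int]_n.+1) j :
  extA v 0 j = if (j < n.+1)%N then v 0 (inord j) else 0.
Proof. by rewrite mxE. Qed.

Lemma extBE {n} (v : 'rV[int]_n.+1) j :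
  extB v 0 j = if (j == 0%N :> nat) then 0 else v 0 (inord j.-1).
Proof. by rewrite mxE. Qed.


Lemma EqQ_lin H N d (a b : rat) u w :
  EqQ H N d u -> EqQ H N d w -> EqQ H N d (a *: u + b *: w).
Proof.
move=> [u1 u2] [w1 w2]; split.
  under eq_bigr do rewrite !mxE.
  by rewrite big_split /= -!mulr_sumr u1 w1 !mulr0 addr0.
under eq_bigr do rewrite !mxE mulrDr mulrCA [X in _ + X]mulrCA.
by rewrite big_split /= -!mulr_sumr u2 w2 !mulr0 addr0.
Qed.

Lemma not_max {d} {i : 'I_d.+3} : ~~ (i < d.+2)%N -> i = ord_max.
Proof. by move=> h; apply: val_inj => /=; have := ltn_ord i; lia. Qed.

Definition bf (H : pred nat) (N d : nat) (j : nat) : rat :=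
  if j == d then sq H N d.+2 - sq H N d.+1 else if j == d.+1 then sq H N d - sq H N d.+2
  else if j == d.+2 then sq H N d.+1 - sq H N d else 0.
Definition Bv (H : pred nat) (N d : nat) : 'rV[rat]_(d.+3) := \row_(j < d.+3) bf H N d j.

Lemma Bv_sum H N d (F : nat -> rat) :
  \sum_(j < d.+3) F j * Bv H N d 0 j = F d * (sq H N d.+2 - sq H N d.+1)
     + F d.+1 * (sq H N d - sq H N d.+2) + F d.+2 * (sq H N d.+1 - sq H N d).
Proof.
rewrite !big_ord_recr /= big1 ?add0r; last first.
  move=> j _; rewrite mxE /bf.
  have := ltn_ord j => hj.
  have -> : (j == d :> nat) = false by lia.
  have -> : (j == d.+1 :> nat) = false by lia.
  have -> : (j == d.+2 :> nat) = false by lia.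
  by rewrite mulr0.
rewrite !mxE /bf /= eqxx.
have -> : (d.+1 == d) = false by lia.
have -> : (d.+2 == d) = false by lia.
have -> : (d.+2 == d.+1) = false by lia.
by rewrite !eqxx.
Qed.

Lemma Bv_EqQ H N d : EqQ H N d.+1 (Bv H N d).
Proof.
split.
  have := Bv_sum H N d (fun _ => 1); under eq_bigr do rewrite mul1r; move=> ->.
  ring.
rewrite Bv_sum; ring.
Qed.

Lemma Bv0 H N d : (1 <= d)%N -> Bv H N d 0 0 = 0.
Proof.
move=> d1; rewrite mxE /bf /=.
have -> : (0 == d)%N = false by lia.
done.
Qed.

Lemma Bvl H N d : Bv H N d 0 ord_max = sq H N d.+1 - sq H N d.
Proof.
rewrite mxE /bf /=.
have -> : (d.+2 == d) = false by lia.
have -> : (d.+2 == d.+1) = false by lia.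
by rewrite eqxx.
Qed.

Lemma bl_nz H N d : (d.+3 <= size (nonholes H N))%N -> sq H N d.+1 - sq H N d != 0.
Proof.
move=> hs; rewrite subr_eq0 /sq; apply/negP => /eqP /intr_inj /eqP.
rewrite eqz_nat nth_uniq ?nh_uniq //.
- by move/eqP; lia.
- exact: (ltnW hs).
- exact: (leq_trans (leqnSn _) (ltnW hs)).
Qed.


Theorem proposition4p1 (d N : nat) (H : pred nat) :
  (1 <= d)%N ->
  ~~ H 1%N ->
  (d.+3 <= size (nonholes H N))%N ->
  perfect (Ld H N d) -> lat_min (Ld H N d) 4 ->
  perfect (Ld (shift_holes H) N d) -> lat_min (Ld (shift_holes H) N d) 4 ->
  (exists x : 'rV[int]_(d.+3), Ld H N d.+1 x /\ vnorm x = 4 /\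
      x 0 ord0 = 1 /\ x 0 ord_max = 1) ->
  perfect (Ld H N d.+1).
Proof.
move=> d1 h1 hs perA minA perB minB [x [Vx [nx [x0 xl]]]] M [MT Mrows].
have Msym i j : M i j = M j i by rewrite -{1}MT mxE.
have Mrow i : EqQ H N d.+1 (row i M) by apply/spanE.
set X := toQ x.
have XE : EqQ H N d.+1 X by apply/Ld_toQ.
have X0 : X 0 0 = 1 by rewrite mxE x0.
have Xl : X 0 ord_max = 1 by rewrite mxE xl.
set c := M 0 ord_max.
set M1 := M - c *: (X^T *m X).
have M1E i j : M1 i j = M i j - c * (X 0 i * X 0 j).
  by rewrite !mxE big_ord1 !mxE.
have M1sym i j : M1 i j = M1 j i by rewrite !M1E Msym [X 0 i * _]mulrC.
have M1row i : EqQ H N d.+1 (row i M1).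
  have -> : row i M1 = 1 *: row i M + (- (c * X 0 i)) *: X.
    by apply/rowP => j; rewrite !mxE big_ord1 !mxE; ring.
  exact: EqQ_lin.
have M10 : M1 0 ord_max = 0 by rewrite M1E X0 Xl /c; ring.
set p := row ord_max M1.
set q := M1 ord_max ord_max.
have pE j : p 0 j = M1 ord_max j by rewrite mxE.
have p0 : p 0 0 = 0 by rewrite pE M1sym.
have pl : p 0 ord_max = q by rewrite pE.
set B := Bv H N d.
set bl := sq H N d.+1 - sq H N d.
have BE : EqQ H N d.+1 B by apply: Bv_EqQ.
have B0 : B 0 0 = 0 by apply: Bv0.
have Bl : B 0 ord_max = bl by apply: Bvl.
have blnz : bl != 0 by apply: bl_nz.
set Q := \matrix_(i, j) (bl^-1 * (B 0 i * p 0 j + p 0 i * B 0 j) - q / bl ^+ 2 * (B 0 i * B 0 j)).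
set P := M1 - Q.
have QE i j : Q i j = bl^-1 * (B 0 i * p 0 j + p 0 i * B 0 j) - q / bl ^+ 2 * (B 0 i * B 0 j).
  by rewrite /Q mxE.
have PE i j : P i j = M1 i j - Q i j by rewrite /P !mxE.
have Qsym i j : Q i j = Q j i by rewrite !QE; ring.
have Psym i j : P i j = P j i by rewrite !PE M1sym Qsym.
have Q0 j : Q 0 j = 0 by rewrite QE B0 p0; ring.
have Pl j : P ord_max j = 0.
  rewrite PE QE Bl pl -pE /p.
  by field.
have Qrow i : EqQ H N d.+1 (row i Q).
  have -> : row i Q = (bl^-1 * B 0 i) *: p + (bl^-1 * p 0 i - q / bl ^+ 2 * B 0 i) *: B.
    by apply/rowP => j; rewrite !mxE; ring.
  apply: EqQ_lin => //; exact: M1row.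
have Prow i : EqQ H N d.+1 (row i P).
  have -> : row i P = 1 *: row i M1 + (-1) *: row i Q.
    by apply/rowP => j; rewrite !mxE; ring.
  exact: EqQ_lin.
have PQ : P + Q = M1 by rewrite /P subrK.
have M1def : M1 = M - c *: (X^T *m X) by [].
clearbody P Q M1.
set PA := \matrix_(i < d.+2, j < d.+2) P (widen_ord (leqnSn _) i) (widen_ord (leqnSn _) j).
have PAE i j : PA i j = P (widen_ord (leqnSn _) i) (widen_ord (leqnSn _) j) by rewrite mxE.
clearbody PA.
have PAt : sym_tensor (Ld H N d) PA.
  split; first by apply/matrixP => i j; rewrite !mxE !PAE Psym.
  move=> i; apply/spanE.
  have [e1 e2] := Prow (widen_ord (leqnSn _) i).
  move: e1; rewrite big_ord_recr /= mxE Psym Pl addr0 => e1.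
  move: e2; rewrite big_ord_recr /= mxE Psym Pl mulr0 addr0 => e2.
  split.
    by rewrite -[RHS]e1; apply: eq_bigr => j _; rewrite !mxE PAE.
  by rewrite -[RHS]e2; apply: eq_bigr => j _; rewrite !mxE PAE.
have sq_shift (j : 'I_d.+2) : sq H N j.+1 = sq (shift_holes H) N j + 1.
  rewrite /sq nh_nth_shift //; last by apply: leq_trans hs; rewrite ltnS.
  by rewrite -addn1 PoszD intrD.
set QB := \matrix_(i < d.+2, j < d.+2) Q (lift ord0 i) (lift ord0 j).
have QBE i j : QB i j = Q (lift ord0 i) (lift ord0 j) by rewrite mxE.
clearbody QB.
have QBt : sym_tensor (Ld (shift_holes H) N d) QB.
  split; first by apply/matrixP => i j; rewrite !mxE !QBE Qsym.
  move=> i; apply/spanE.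
  have [e1 e2] := Qrow (lift ord0 i).
  move: e1; rewrite big_ord_recl /= mxE Qsym Q0 add0r => e1.
  move: e2; rewrite big_ord_recl /= mxE Qsym Q0 mulr0 add0r => e2.
  split.
    by rewrite -[RHS]e1; apply: eq_bigr => j _; rewrite !mxE QBE.
  transitivity (\sum_(j < d.+2) sq H N (lift ord0 j) * row (lift ord0 i) Q 0 (lift ord0 j)
     - \sum_(j < d.+2) row (lift ord0 i) Q 0 (lift ord0 j)).
    rewrite -sumrB; apply: eq_bigr => j _; rewrite !mxE QBE lift0 sq_shift; ring.
  by rewrite e1 e2 subr0.
have [vsA [csA [hA PAdec]]] := perA PA PAt.
have [vsB [csB [hB QBdec]]] := perB QB QBt.
have PD : P = \sum_(k < size vsA) csA`_k *: G (extA vsA`_k).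
  apply/matrixP => i j; rewrite summxE.
  under eq_bigr do rewrite mxE GE !extAE.
  case hi: (i < d.+2)%N; case hj: (j < d.+2)%N.
  - have -> : P i j = PA (inord i) (inord j).
      by rewrite PAE; congr (P _ _); apply: val_inj; rewrite /= inordK.
    by rewrite PAdec summxE; apply: eq_bigr => k _; rewrite mxE GE.
  - rewrite (not_max (negbT hj)) Psym Pl big1 // => k _.
    by rewrite mulr0z ?mulr0 ?mul0r ?mulr0.
  - rewrite (not_max (negbT hi)) Pl big1 // => k _.
    by rewrite mulr0z ?mulr0 ?mul0r ?mulr0.
  - rewrite (not_max (negbT hi)) Pl big1 // => k _.
    by rewrite mulr0z ?mulr0 ?mul0r ?mulr0.
have QD : Q = \sum_(k < size vsB) csB`_k *: G (extB vsB`_k).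
  apply/matrixP => i j; rewrite summxE.
  under eq_bigr do rewrite mxE GE !extBE.
  case hi: (i == 0%N :> nat); case hj: (j == 0%N :> nat).
  - have -> : i = ord0 by apply: val_inj; apply/eqP.
    by rewrite Q0 big1 // => k _; rewrite mulr0z ?mulr0 ?mul0r ?mulr0.
  - have -> : i = ord0 by apply: val_inj; apply/eqP.
    by rewrite Q0 big1 // => k _; rewrite mulr0z ?mulr0 ?mul0r ?mulr0.
  - have -> : j = ord0 by apply: val_inj; apply/eqP.
    by rewrite Qsym Q0 big1 // => k _; rewrite mulr0z ?mulr0 ?mul0r ?mulr0.
  - have li (k : 'I_d.+3) : (k == 0%N :> nat) = false -> lift ord0 (inord k.-1 : 'I_d.+2) = k.
      move=> hk; apply: val_inj => /=; rewrite /bump leq0n add1n inordK; last by have := ltn_ord k; lia.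
      by move: hk; case: (nat_of_ord k).
    have -> : Q i j = QB (inord i.-1) (inord j.-1) by rewrite QBE !li.
    by rewrite QBdec summxE; apply: eq_bigr => k _; rewrite mxE GE.
have Mdec : M = c *: G x + (P + Q) by rewrite PQ M1def addrC subrK.
suff : Rep (Ld H N d.+1) M by [].
rewrite Mdec; apply: Rep_cons; first by apply: V_min.
apply: Rep_add; [rewrite PD | rewrite QD]; apply: Rep_map => v hv.
  apply: V_min => //; first by apply: extA_L; case: (hA v hv).
  by rewrite extA_norm; apply: norm4 minA; apply: hA.
apply: V_min => //; first by apply: extB_L => //; case: (hB v hv).
by rewrite extB_norm; apply: norm4 minB; apply: hB.
Qed.
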